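(* Let $q\in(1,+\infty)$ and define $f:[1,+\infty)\to\mathbb R$ by $f(1)=-1$ and, for $y>1$, $$f(y)=-q\,\frac{y^{\frac q{q-1}}}{y^{\frac q{q-1}}-(y-1)^{\frac q{q-1}}}+(q-1)y.$$ Then: \begin{enumerate} \item $f$ is continuous and increasing, smooth on $(1,+\infty)$, and is a bijection from $[1,+\infty)$ onto $[-1,-1/2)$ with an increasing and continuous inverse. \item For $y>1$, $$f'(y)=\frac{(q-1)^2\left(y^{\frac q{q-1}}-(y-1)^{\frac q{q-1}}\right)^2-q^2y^{\frac1{q-1}}(y-1)^{\frac1{q-1}}}{(q-1)\left(y^{\frac q{q-1}}-(y-1)^{\frac q{q-1}}\right)^2},$$ and the extension of $f'$ by the value $q-1$ at $y=1$ is continuous on $[1,+\infty)$. \end{enumerate} *)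

(* Defs.v *)
From Stdlib Require Import Reals Lra.
From Coquelicot Require Import Coquelicot.
Open Scope R_scope.

(* The function f of the lemma, for a parameter q > 1.
   Real powers are Rpower (= exp (a * ln x)), applied only to positive bases.
   f 1 = -1; values for y < 1 are irrelevant (domain is [1,+oo)). *)
Definition fq (q y : R) : R :=
  if Rle_dec y 1 then -1
  else - q * (Rpower y (q / (q - 1)) /
               (Rpower y (q / (q - 1)) - Rpower (y - 1) (q / (q - 1))))
       + (q - 1) * y.

Definition fq_deriv_formula (q y : R) : R :=
  ((q - 1) ^ 2 * (Rpower y (q / (q - 1)) - Rpower (y - 1) (q / (q - 1))) ^ 2
     - q ^ 2 * Rpower y (1 / (q - 1)) * Rpower (y - 1) (1 / (q - 1)))
  / ((q - 1) * (Rpower y (q / (q - 1)) - Rpower (y - 1) (q / (q - 1))) ^ 2).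

Definition fq_deriv_ext (q y : R) : R :=
  if Rlt_dec 1 y then Derive (fq q) y else q - 1.

(* Main.v *)
Require Import Defs.
From Stdlib Require Import Reals.
From Coquelicot Require Import Coquelicot.
From Stdlib Require Import Lra Lia ClassicalEpsilon.
Open Scope R_scope.

Definition Cn (U : R -> Prop) (m : nat) (g : R -> R) :=
  forall k, (k <= m)%nat -> forall y, U y -> ex_derive_n g k y.

Lemma Cn_0 U g : Cn U 0 g.
Proof. intros k Hk y _. destruct k; [exact I| lia]. Qed.

Lemma Cn_mono U m g : Cn U (S m) g -> Cn U m g.
Proof. intros H k Hk; apply H; lia. Qed.

Lemma Cn_der U m g : Cn U (S m) g -> forall y, U y -> is_derive g y (Derive g y).
Proof. intros H y Hy. apply Derive_correct. exact (H 1%nat ltac:(lia) y Hy). Qed.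

Lemma Dn_shift U g h : open U -> (forall y, U y -> is_derive g y (h y)) ->
  forall i y, U y -> Derive_n g (S i) y = Derive_n h i y.
Proof.
  intros HU Hd i. induction i as [|i IH]; intros y Hy.
  - simpl. apply is_derive_unique; auto.
  - change (Derive (Derive_n g (S i)) y = Derive (Derive_n h i) y).
    apply Derive_ext_loc. apply (filter_imp U); [|apply HU; auto].
    intros t Ht; apply IH; auto.
Qed.

Lemma Cn_step U m g h : open U -> (forall y, U y -> is_derive g y (h y)) ->
  Cn U m h -> Cn U (S m) g.
Proof.
  intros HU Hd Hh k Hk y Hy. destruct k as [|k]; [exact I|].
  destruct k as [|j].
  - exists (h y). simpl. auto.
  - change (ex_derive (Derive_n g (S j)) y).
    apply ex_derive_ext_loc with (Derive_n h j).
    + apply (filter_imp U); [|apply HU; auto].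
      intros t Ht; symmetry; apply (Dn_shift U g h); auto.
    + exact (Hh (S j) ltac:(lia) y Hy).
Qed.

Lemma Cn_deriv U m g h : open U -> (forall y, U y -> is_derive g y (h y)) ->
  Cn U (S m) g -> Cn U m h.
Proof.
  intros HU Hd Hg k Hk y Hy. destruct k as [|j]; [exact I|].
  change (ex_derive (Derive_n h j) y).
  apply ex_derive_ext_loc with (Derive_n g (S j)).
  + apply (filter_imp U); [|apply HU; auto].
    intros t Ht; apply (Dn_shift U g h); auto.
  + exact (Hg (S (S j)) ltac:(lia) y Hy).
Qed.

Lemma Cn_Derive U m g : open U -> Cn U (S m) g -> Cn U m (Derive g).
Proof. intros HU Hg. apply (Cn_deriv U m g); auto. apply (Cn_der U m g Hg). Qed.

Lemma Cn_ext U m g h : open U -> (forall y, U y -> g y = h y) -> Cn U m g -> Cn U m h.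
Proof.
  intros HU He Hg k Hk y Hy. apply ex_derive_n_ext_loc with g.
  apply (filter_imp U); [|apply HU; auto]. auto. auto.
Qed.

Lemma Cn_const U m c : open U -> Cn U m (fun _ => c).
Proof.
  intros HU. revert c; induction m as [|m IH]; intros c; [apply Cn_0|].
  apply Cn_step with (fun _ => 0); auto.
  intros; apply (is_derive_const c).
Qed.

Lemma Cn_id U m : open U -> Cn U m (fun y => y).
Proof.
  intros HU. destruct m; [apply Cn_0|].
  apply Cn_step with (fun _ => 1); auto using Cn_const.
  intros; apply (is_derive_id y).
Qed.

Lemma Cn_plus U m g h : open U -> Cn U m g -> Cn U m h -> Cn U m (fun y => g y + h y).
Proof.
  intros HU. revert g h; induction m as [|m IH]; intros g h Hg Hh; [apply Cn_0|].
  apply Cn_step with (fun y => Derive g y + Derive h y); auto.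
  - intros y Hy. apply (is_derive_plus g h); eapply Cn_der; eauto.
  - apply IH; apply Cn_Derive; auto.
Qed.

Lemma Cn_mult U m g h : open U -> Cn U m g -> Cn U m h -> Cn U m (fun y => g y * h y).
Proof.
  intros HU. revert g h; induction m as [|m IH]; intros g h Hg Hh; [apply Cn_0|].
  apply Cn_step with (fun y => Derive g y * h y + g y * Derive h y); auto.
  - intros y Hy. apply (is_derive_mult g h); [eapply Cn_der; eauto|eapply Cn_der; eauto|].
    intros; apply Rmult_comm.
  - apply Cn_plus; auto; apply IH; auto using Cn_mono, Cn_Derive.
Qed.

Lemma Cn_comp U V m phi g : open U -> open V -> (forall y, U y -> V (g y)) ->
  Cn V m phi -> Cn U m g -> Cn U m (fun y => phi (g y)).
Proof.
  intros HU HV Hm. revert phi g Hm; induction m as [|m IH]; intros phi g Hm Hp Hg; [apply Cn_0|].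
  apply Cn_step with (fun y => Derive g y * Derive phi (g y)); auto.
  - intros y Hy. apply (is_derive_comp phi g); [eapply Cn_der; eauto|eapply Cn_der; eauto].
  - apply Cn_mult; auto.
    + apply Cn_Derive; auto.
    + apply (IH (Derive phi) g); auto using Cn_mono, Cn_Derive.
Qed.

Definition Upos := fun y : R => 0 < y.
Lemma open_Upos : open Upos. Proof. apply open_gt. Qed.

Lemma Cn_exp U m : open U -> Cn U m exp.
Proof.
  intros HU. induction m as [|m IH]; [apply Cn_0|].
  apply Cn_step with exp; auto. intros; apply is_derive_exp.
Qed.

Lemma Cn_inv m : Cn Upos m Rinv.
Proof.
  induction m as [|m IH]; [apply Cn_0|].
  apply Cn_step with (fun y => (-1) * (/ y * / y)); auto using open_Upos.
  - intros y Hy. unfold Upos in Hy.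
    assert (H := is_derive_inv (fun t => t) y 1 (is_derive_id y) ltac:(lra)).
    simpl in H. replace ((-1) * (/ y * / y)) with (- (1) / (y * (y * 1)))
      by (field; lra). exact H.
  - apply Cn_mult; auto using open_Upos, Cn_const, Cn_mult.
Qed.

Lemma Cn_ln m : Cn Upos m ln.
Proof.
  destruct m; [apply Cn_0|].
  apply Cn_step with Rinv; auto using open_Upos, Cn_inv.
  intros; apply is_derive_ln; auto.
Qed.

Lemma Cn_Rpower m a : Cn Upos m (fun y => Rpower y a).
Proof.
  unfold Rpower. apply (Cn_comp Upos (fun _ => True)); auto using open_Upos, open_true, Cn_exp.
  apply Cn_mult; auto using open_Upos, Cn_const, Cn_ln.
Qed.

Definition Fq (q y : R) := (-q) * (Rpower y (q/(q-1)) * / (Rpower y (q/(q-1)) + (-1) * Rpower (y-1) (q/(q-1)))) + (q-1) * y.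

Lemma fq_eq q y : 1 < y -> fq q y = Fq q y.
Proof. intros H. unfold fq, Fq. destruct (Rle_dec y 1); [lra|].
  replace (Rpower y (q/(q-1)) + (-1) * Rpower (y-1) (q/(q-1))) with (Rpower y (q/(q-1)) - Rpower (y-1) (q/(q-1))) by ring.
  unfold Rdiv. ring. Qed.

Lemma fq_le1 q y : y <= 1 -> fq q y = -1.
Proof. intros H. unfold fq. destruct (Rle_dec y 1); [auto|lra]. Qed.

Lemma pexp_pos q : 1 < q -> 0 < q/(q-1).
Proof. intros; apply Rdiv_lt_0_compat; lra. Qed.

Lemma D_pos q y : 1 < q -> 1 < y -> Rpower (y-1) (q/(q-1)) < Rpower y (q/(q-1)).
Proof. intros. apply Rlt_Rpower_l; [apply pexp_pos; auto| lra]. Qed.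

Definition U1 := fun y : R => 1 < y.
Lemma open_U1 : open U1. Proof. apply open_gt. Qed.

Lemma Cn_Fq q m : 1 < q -> Cn U1 m (Fq q).
Proof.
  intros hq. unfold Fq.
  assert (HB : Cn U1 m (fun y => Rpower (y - 1) (q / (q - 1)))).
  { apply (Cn_comp U1 Upos m (fun u => Rpower u (q/(q-1))) (fun y => y - 1));
      auto using open_U1, open_Upos, Cn_Rpower.
    - intros y Hy; unfold U1, Upos in *; lra.
    - apply (Cn_ext U1 m (fun y => y + (-1))); [apply open_U1| intros y _; simpl; lra | apply Cn_plus; auto using open_U1, Cn_id, Cn_const]. }
  assert (HA : Cn U1 m (fun y => Rpower y (q / (q - 1)))).
  { apply (Cn_comp U1 Upos m (fun u => Rpower u (q/(q-1))) (fun y => y));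
      auto using open_U1, open_Upos, Cn_Rpower, Cn_id.
    intros y Hy; unfold U1, Upos in *; lra. }
  apply Cn_plus; auto using open_U1.
  - apply Cn_mult; auto using open_U1, Cn_const.
    apply Cn_mult; auto using open_U1.
    apply (Cn_comp U1 Upos m Rinv); auto using open_U1, open_Upos, Cn_inv.
    + intros y Hy; unfold U1, Upos in *. assert (H := D_pos q y hq Hy). lra.
    + apply Cn_plus; auto using open_U1. apply Cn_mult; auto using open_U1, Cn_const.
  - apply Cn_mult; auto using open_U1, Cn_const, Cn_id.
Qed.

Lemma smooth_fq q y n : 1 < q -> 1 < y -> ex_derive_n (fq q) n y.
Proof.
  intros hq hy. assert (H : Cn U1 n (fq q)).
  { apply (Cn_ext U1 n (Fq q)); auto using open_U1, Cn_Fq.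
    intros; symmetry; apply fq_eq; auto. }
  apply (H n (le_n n) y hy).
Qed.

Lemma Derive_Rpower u a : 0 < u -> Derive (fun x => Rpower x a) u = a * Rpower u (a - 1).
Proof. intros. apply is_derive_unique, is_derive_Reals, derivable_pt_lim_power; auto. Qed.

Lemma Rp_split u q : 0 < u -> 1 < q -> Rpower u (q/(q-1)) = u * Rpower u (1/(q-1)).
Proof.
  intros. replace (q/(q-1)) with (1 + 1/(q-1)) by (field; lra).
  rewrite Rpower_plus, Rpower_1; auto.
Qed.

Lemma deriv_Fq q y : 1 < q -> 1 < y -> is_derive (Fq q) y (fq_deriv_formula q y).
Proof.
  intros hq hy. assert (HD := D_pos q y hq hy). unfold Fq.
  auto_derive.
  - repeat split; try (exists (q/(q-1) * Rpower y (q/(q-1) - 1)); apply is_derive_Reals, derivable_pt_lim_power; lra).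
    exists (q/(q-1) * Rpower (y + -(1)) (q/(q-1) - 1)); apply is_derive_Reals, derivable_pt_lim_power; lra.
    replace (y + - (1)) with (y - 1) by ring. lra.
  - replace (y + - (1)) with (y - 1) by ring.
    rewrite !Derive_Rpower by lra.
    replace (q/(q-1) - 1) with (1/(q-1)) by (field; lra).
    unfold fq_deriv_formula. revert HD.
    rewrite !(Rp_split y q), !(Rp_split (y-1) q) by lra.
    intros HD.
    field. split; lra.
Qed.

Lemma deriv_fq q y : 1 < q -> 1 < y -> is_derive (fq q) y (fq_deriv_formula q y).
Proof.
  intros hq hy. apply is_derive_ext_loc with (Fq q).
  - apply (filter_imp U1); [|apply open_U1; auto].
    intros; symmetry; apply fq_eq; auto.
  - apply deriv_Fq; auto.
Qed.

Lemma cR_plus (f g : R -> R) x : continuous f x -> continuous g x -> continuous (fun y => f y + g y) x.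
Proof. intros; apply (continuous_plus f g x); auto. Qed.
Lemma cR_mult (f g : R -> R) x : continuous f x -> continuous g x -> continuous (fun y => f y * g y) x.
Proof. intros; apply (continuous_mult f g x); auto. Qed.
Lemma cR_const (c x : R) : continuous (fun _ : R => c) x.
Proof. apply continuous_const. Qed.
Lemma cR_id (x : R) : continuous (fun y : R => y) x.
Proof. apply continuous_id. Qed.
Lemma cR_inv (f : R -> R) x : continuous f x -> f x <> 0 -> continuous (fun y => / f y) x.
Proof. intros; apply (continuous_Rinv_comp f x); auto. Qed.
Lemma cR_comp (f g : R -> R) x : continuous f x -> continuous g (f x) -> continuous (fun y => g (f y)) x.
Proof. intros; apply (continuous_comp f g x); auto. Qed.

Definition pw a x := if Rlt_dec 0 x then Rpower x a else 0.

Lemma pw_pos a x : 0 < x -> pw a x = Rpower x a.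
Proof. intros; unfold pw; destruct Rlt_dec; lra. Qed.
Lemma pw_npos a x : x <= 0 -> pw a x = 0.
Proof. intros; unfold pw; destruct Rlt_dec; lra. Qed.

Lemma Rpower_1_l a : Rpower 1 a = 1.
Proof. unfold Rpower; rewrite ln_1, Rmult_0_r; apply exp_0. Qed.

Lemma cont_pw a x : 0 < a -> continuous (pw a) x.
Proof.
  intros ha. destruct (Rlt_dec 0 x) as [Hx|Hx].
  - apply continuous_ext_loc with (fun y => Rpower y a).
    + apply (filter_imp Upos); [|apply open_Upos; auto].
      intros; symmetry; apply pw_pos; auto.
    + apply continuity_pt_filterlim, derivable_continuous_pt.
      exists (a * Rpower x (a - 1)). apply derivable_pt_lim_power; auto.
  - destruct (Rlt_dec x 0) as [Hx'|Hx'].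
    + apply continuous_ext_loc with (fun _ => 0).
      * apply (filter_imp (fun y => y < 0)); [|apply open_lt; auto].
        intros; symmetry; apply pw_npos; lra.
      * apply cR_const.
    + assert (x = 0) by lra. subst x.
      apply continuity_pt_filterlim, continuity_pt_locally.
      intros eps. rewrite (pw_npos a 0) by lra.
      assert (Hd : 0 < Rpower eps (1/a)) by apply exp_pos.
      exists (mkposreal _ Hd). intros y Hy.
      change (Rabs (y - 0) < Rpower eps (1/a)) in Hy.
      rewrite Rminus_0_r in *.
      destruct (Rlt_dec 0 y) as [Hy0|Hy0].
      * rewrite pw_pos by auto. rewrite Rabs_right by (left; apply exp_pos).
        replace (pos eps) with (Rpower (Rpower eps (1/a)) a).
        apply Rlt_Rpower_l; auto. rewrite Rabs_right in Hy by lra. lra.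
        rewrite Rpower_mult. replace (1/a*a) with 1 by (field; lra).
        apply Rpower_1. apply cond_pos.
      * rewrite pw_npos by lra. rewrite Rabs_R0. apply cond_pos.
Qed.

Lemma cR_minus1 (x : R) : continuous (fun y : R => y - 1) x.
Proof. apply (continuous_minus (fun y : R => y) (fun _ => 1) x); [apply cR_id|apply cR_const]. Qed.

Definition Dd q y := pw (q/(q-1)) y + (-1) * pw (q/(q-1)) (y - 1).
Definition G q y := (-q) * (pw (q/(q-1)) y * / Dd q y) + (q-1) * y.
Definition H q y := ((q-1)*(q-1) * (Dd q y * Dd q y) + (-1) * (q*q * pw (1/(q-1)) y * pw (1/(q-1)) (y - 1))) * / ((q-1) * (Dd q y * Dd q y)).

Lemma Dd_pos q y : 1 < q -> 1 <= y -> 0 < Dd q y.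
Proof.
  intros hq hy. unfold Dd. destruct (Rle_lt_or_eq_dec 1 y hy) as [h|h].
  - rewrite !pw_pos by lra. assert (H0 := D_pos q y hq h). lra.
  - subst y. rewrite pw_pos, pw_npos by lra. rewrite Rpower_1_l. lra.
Qed.

Lemma cont_pw_m1 a y : 0 < a -> continuous (fun y => pw a (y - 1)) y.
Proof. intros; apply (cR_comp (fun y => y - 1) (pw a)); [apply cR_minus1|apply cont_pw; auto]. Qed.

Lemma cont_Dd q y : 1 < q -> continuous (Dd q) y.
Proof.
  intros hq. unfold Dd. apply cR_plus; [apply cont_pw, pexp_pos; auto|].
  apply cR_mult; [apply cR_const|apply cont_pw_m1, pexp_pos; auto].
Qed.

Lemma cont_G q y : 1 < q -> 1 <= y -> continuous (G q) y.
Proof.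
  intros hq hy. unfold G. apply cR_plus; [|apply cR_mult; [apply cR_const|apply cR_id]].
  apply cR_mult; [apply cR_const|]. apply cR_mult; [apply cont_pw, pexp_pos; auto|].
  apply (cR_inv (Dd q)); [apply cont_Dd; auto|]. assert (H0 := Dd_pos q y hq hy); lra.
Qed.

Lemma cont_H q y : 1 < q -> 1 <= y -> continuous (H q) y.
Proof.
  intros hq hy. assert (ha : 0 < 1/(q-1)) by (apply Rdiv_lt_0_compat; lra).
  assert (HD := cont_Dd q y hq).
  unfold H. apply cR_mult.
  - apply cR_plus.
    + apply cR_mult; [apply cR_const|apply cR_mult; auto].
    + apply cR_mult; [apply cR_const|]. apply cR_mult; [|apply cont_pw_m1; auto].
      apply cR_mult; [apply cR_const|apply cont_pw; auto].
  - apply (cR_inv (fun y => (q-1) * (Dd q y * Dd q y))).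
    + apply cR_mult; [apply cR_const|apply cR_mult; auto].
    + assert (H0 := Dd_pos q y hq hy). apply Rmult_integral_contrapositive; split; [lra|].
      apply Rmult_integral_contrapositive; split; lra.
Qed.

Lemma fq_G q y : 1 < q -> fq q y = G q (Rmax 1 y).
Proof.
  intros hq. unfold Rmax. destruct (Rle_dec 1 y) as [h|h].
  - destruct (Rle_lt_or_eq_dec 1 y h) as [h'|h'].
    + rewrite fq_eq by auto. unfold Fq, G, Dd. rewrite !pw_pos by lra. reflexivity.
    + subst y. rewrite fq_le1 by lra. unfold G, Dd.
      rewrite pw_pos, pw_npos, Rpower_1_l by lra. field.
  - rewrite fq_le1 by lra. unfold G, Dd.
    rewrite pw_pos, pw_npos, Rpower_1_l by lra. field.
Qed.

Lemma Rmax_abs y : Rmax 1 y = (1 + y + Rabs (y - 1)) / 2.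
Proof.
  unfold Rmax. destruct (Rle_dec 1 y).
  - rewrite Rabs_right by lra. field.
  - rewrite Rabs_left by lra. field.
Qed.

Lemma cont_Rmax y : continuous (fun y => Rmax 1 y) y.
Proof.
  apply continuous_ext with (fun y => (1 + y + Rabs (y - 1)) * / 2).
  - intros; rewrite Rmax_abs; reflexivity.
  - apply cR_mult; [|apply cR_const]. apply cR_plus; [apply cR_plus; [apply cR_const|apply cR_id]|].
    apply (cR_comp (fun y => y - 1) Rabs); [apply cR_minus1|apply continuous_Rabs].
Qed.

Lemma cont_fq q y : 1 < q -> continuous (fq q) y.
Proof.
  intros hq. apply continuous_ext with (fun y => G q (Rmax 1 y)).
  - intros; symmetry; apply fq_G; auto.
  - apply (cR_comp (fun y => Rmax 1 y) (G q)); [apply cont_Rmax|].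
    apply cont_G; auto. apply Rmax_l.
Qed.

Lemma fqd_H q y : 1 < q -> 1 <= y -> fq_deriv_ext q y = H q y.
Proof.
  intros hq hy. unfold fq_deriv_ext. destruct (Rlt_dec 1 y) as [h|h].
  - rewrite (is_derive_unique _ _ _ (deriv_fq q y hq h)).
    assert (HD := D_pos q y hq h).
    unfold fq_deriv_formula, H, Dd. rewrite !pw_pos by lra.
    field. split; lra.
  - assert (y = 1) by lra. subst y. unfold H, Dd.
    rewrite pw_pos, !pw_npos, !Rpower_1_l by lra. rewrite (pw_npos (1/(q-1)) (1-1)) by lra. field. lra.
Qed.

Lemma cosh_lt u v : 0 < v -> v < u -> exp v + exp (-v) < exp u + exp (-u).
Proof.
  intros hv hvu. rewrite !exp_Ropp.
  assert (hX : exp v < exp u) by (apply exp_increasing; lra).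
  assert (hY : 1 < exp v) by (rewrite <- exp_0; apply exp_increasing; lra).
  assert (E : exp u + / exp u - (exp v + / exp v) = (exp u - exp v) * (exp u * exp v - 1) / (exp u * exp v)).
  { field; split; apply Rgt_not_eq, exp_pos. }
  assert (0 < (exp u - exp v) * (exp u * exp v - 1) / (exp u * exp v)).
  { apply Rdiv_lt_0_compat; [apply Rmult_lt_0_compat|]; nra. }
  lra.
Qed.

Lemma sinh_ineq p t : 1 < p -> 0 < t -> p * (exp t - exp (-t)) < exp (p*t) - exp (-(p*t)).
Proof.
  intros hp ht.
  set (h := fun s => exp (p*s) - exp (-(p*s)) - p * (exp s - exp (-s))).
  set (h' := fun s => p * (exp (p*s) + exp (-(p*s))) - p * (exp s + exp (-s))).
  destruct (MVT_cor2 h h' 0 t ht) as [c [Hc1 Hc2]].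
  - intros c _. apply is_derive_Reals. unfold h, h'. auto_derive; auto. ring.
  - assert (h 0 = 0) by (unfold h; rewrite Rmult_0_r, Ropp_0, exp_0; ring).
    assert (0 < h' c).
    { unfold h'. assert (H1 := cosh_lt (p*c) c ltac:(lra) ltac:(nra)). nra. }
    assert (0 < h t) by nra. unfold h in *. lra.
Qed.

Lemma key_ineq q y : 1 < q -> 1 < y ->
  q * Rpower (y * (y - 1)) (1/(2*(q-1))) < (q-1) * (Rpower y (q/(q-1)) - Rpower (y-1) (q/(q-1))).
Proof.
  intros hq hy.
  set (p := q/(q-1)). set (a := 1/(q-1)).
  assert (hp : p = a + 1) by (unfold p, a; field; lra).
  assert (hp1 : 1 < p) by (rewrite hp; unfold a; assert (0 < 1/(q-1)) by (apply Rdiv_lt_0_compat; lra); lra).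
  assert (hqa : q = (q-1) * p) by (unfold p; field; lra).
  set (u := ln y). set (v := ln (y-1)).
  assert (hu : exp u = y) by (apply exp_ln; lra).
  assert (hv : exp v = y - 1) by (apply exp_ln; lra).
  assert (huv : v < u) by (apply ln_increasing; lra).
  set (m := (u+v)/2). set (t := (u-v)/2).
  assert (ht : 0 < t) by (unfold t; lra).
  assert (Eu : u = m + t) by (unfold m, t; field).
  assert (Ev : v = m - t) by (unfold m, t; field).
  assert (E1 : exp m * (exp t - exp (-t)) = 1).
  { rewrite Rmult_minus_distr_l, <- !exp_plus.
    replace (m + t) with u by lra. replace (m + - t) with v by lra. lra. }
  assert (Hs := sinh_ineq p t hp1 ht).
  assert (EA : Rpower y p = exp (p*m) * exp (p*t)).
  { unfold Rpower. fold u. rewrite <- exp_plus. f_equal. rewrite Eu. ring. }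
  assert (EB : Rpower (y-1) p = exp (p*m) * exp (-(p*t))).
  { unfold Rpower. fold v. rewrite <- exp_plus. f_equal. rewrite Ev. ring. }
  assert (EG : Rpower (y * (y-1)) (1/(2*(q-1))) = exp (a*m)).
  { unfold Rpower. rewrite ln_mult by lra. fold u v. f_equal. unfold a, m. field. lra. }
  assert (Epm : exp (p*m) = exp (a*m) * exp m) by (rewrite <- exp_plus; f_equal; rewrite hp; ring).
  rewrite EA, EB, EG.
  assert (0 < exp (a*m)) by apply exp_pos.
  assert (0 < exp (p*m)) by apply exp_pos.
  (* D = exp(pm) * S_p > p exp(pm) S_1 = p exp(am) *)
  assert (HD : p * exp (a*m) < exp (p*m) * exp (p*t) - exp (p*m) * exp (-(p*t))).
  { rewrite <- Rmult_minus_distr_l.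
    apply Rle_lt_trans with (exp (p*m) * (p * (exp t - exp (-t)))).
    - rewrite Epm. replace (exp (a * m) * exp m * (p * (exp t - exp (- t))))
        with (p * exp (a*m) * (exp m * (exp t - exp (-t)))) by ring.
      rewrite E1. lra.
    - apply Rmult_lt_compat_l; lra. }
  rewrite hqa at 1. assert (0 < q - 1) by lra.
  replace ((q-1) * p * exp (a*m)) with ((q-1) * (p * exp (a*m))) by ring.
  apply Rmult_lt_compat_l; auto.
Qed.

Lemma formula_pos q y : 1 < q -> 1 < y -> 0 < fq_deriv_formula q y.
Proof.
  intros hq hy. assert (K := key_ineq q y hq hy).
  set (Gm := Rpower (y * (y - 1)) (1/(2*(q-1)))) in *.
  assert (hG : 0 < Gm) by apply exp_pos.
  assert (EG : Rpower y (1/(q-1)) * Rpower (y-1) (1/(q-1)) = Gm * Gm).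
  { rewrite Rpower_mult_distr by lra. unfold Gm. rewrite <- Rpower_plus. f_equal. field. lra. }
  unfold fq_deriv_formula. rewrite Rmult_assoc, EG.
  set (D := Rpower y (q / (q - 1)) - Rpower (y - 1) (q / (q - 1))) in *.
  assert (0 < D) by (assert (H0 := D_pos q y hq hy); unfold D; lra).
  apply Rdiv_lt_0_compat.
  - assert (0 < q * Gm) by nra. nra.
  - assert (0 < D ^ 2) by nra. nra.
Qed.

Lemma fq_incr q x y : 1 < q -> 1 <= x -> x < y -> fq q x < fq q y.
Proof.
  intros hq hx hxy.
  set (df := fun c => if Rlt_dec 1 c then fq_deriv_formula q c else 1).
  destruct (MVT_gen (fq q) x y df) as [c [Hc E]].
  - intros c Hc. rewrite Rmin_left, Rmax_right in Hc by lra.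
    unfold df. destruct (Rlt_dec 1 c); [|lra]. apply deriv_fq; auto.
  - intros c _. apply continuity_pt_filterlim. apply cont_fq; auto.
  - assert (0 < df c).
    { unfold df. destruct (Rlt_dec 1 c); [apply formula_pos; auto|lra]. }
    nra.
Qed.

Definition Ef p s := 1 - Rpower (1-s) p.
Definition Kf q s := (q-1+s/2) * Ef (q/(q-1)) s - q*s.
Definition K1 q s := Ef (q/(q-1)) s / 2 + (q-1+s/2) * ((q/(q-1)) * Rpower (1-s) (q/(q-1)-1)) - q.
Definition K2 q s := (q/(q-1)) * Rpower (1-s) (q/(q-1)-1)
   + (q-1+s/2) * (-((q/(q-1))*(q/(q-1)-1)) * Rpower (1-s) (q/(q-1)-1-1)).

Lemma exd_Rp u e : 0 < u -> ex_derive (fun x => Rpower x e) u.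
Proof. intros. exists (e * Rpower u (e-1)). apply is_derive_Reals, derivable_pt_lim_power; auto. Qed.

Lemma der_K q s : 1 < q -> s < 1 -> derivable_pt_lim (Kf q) s (K1 q s).
Proof.
  intros hq hs. apply is_derive_Reals. unfold Kf, K1, Ef. auto_derive.
  - repeat split; apply exd_Rp; lra.
  - rewrite Derive_Rpower by lra. replace (1 + - s) with (1 - s) by ring. field. lra.
Qed.

Lemma der_K1 q s : 1 < q -> s < 1 -> derivable_pt_lim (K1 q) s (K2 q s).
Proof.
  intros hq hs. apply is_derive_Reals. unfold K2, K1, Ef. auto_derive.
  - repeat split; apply exd_Rp; lra.
  - rewrite !Derive_Rpower by lra. replace (1 + - s) with (1 - s) by ring. field. lra.
Qed.

Lemma cont_K2 q : continuity_pt (K2 q) 0.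
Proof.
  apply derivable_continuous_pt.
  assert (H : ex_derive (K2 q) 0).
  { unfold K2. auto_derive. repeat split; apply exd_Rp; lra. }
  exists (Derive (K2 q) 0). apply is_derive_Reals, Derive_correct; auto.
Qed.

Lemma K_0 q : Kf q 0 = 0.
Proof. unfold Kf, Ef. rewrite Rminus_0_r, Rpower_1_l. ring. Qed.

Lemma K1_0 q : 1 < q -> K1 q 0 = 0.
Proof.
  intros hq. unfold K1, Ef. rewrite Rminus_0_r, !Rpower_1_l. field. lra.
Qed.

Lemma K2_0 q : 1 < q -> K2 q 0 = 0.
Proof.
  intros hq. unfold K2. rewrite Rminus_0_r, !Rpower_1_l. field. lra.
Qed.

Lemma Ef_ge p s : 1 < p -> 0 < s < 1 -> s < Ef p s.
Proof.
  intros hp hs. unfold Ef.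
  replace p with (1 + (p-1)) by ring. rewrite Rpower_plus, Rpower_1 by lra.
  assert (Rpower (1-s) (p-1) < 1).
  { assert (ln (1-s) < 0) by (rewrite <- ln_1; apply ln_increasing; lra).
    assert (Hl : (p-1) * ln (1-s) < 0) by nra.
    pose proof (exp_increasing _ _ Hl) as H1. rewrite exp_0 in H1. exact H1. }
  assert (0 < Rpower (1-s) (p-1)) by apply exp_pos. nra.
Qed.

Lemma K_bound q s eps : 1 < q -> 0 < s < 1 ->
  (forall c, 0 < c < s -> Rabs (K2 q c) < eps) -> Rabs (Kf q s) <= eps * s^2.
Proof.
  intros hq hs Hc.
  destruct (MVT_cor2 (Kf q) (K1 q) 0 s ltac:(lra)) as [c1 [E1 Hc1]].
  { intros c hc; apply der_K; auto; lra. }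
  destruct (MVT_cor2 (K1 q) (K2 q) 0 c1 ltac:(lra)) as [c2 [E2 Hc2]].
  { intros c hc; apply der_K1; auto; lra. }
  rewrite K_0 in E1. rewrite K1_0 in E2 by auto.
  assert (HK : Kf q s = K2 q c2 * c1 * s) by (rewrite Rminus_0_r in *; nra).
  rewrite HK, !Rabs_mult, (Rabs_right c1), (Rabs_right s) by lra.
  assert (H2 := Hc c2 ltac:(lra)). assert (0 <= Rabs (K2 q c2)) by apply Rabs_pos.
  assert (Rabs (K2 q c2) * c1 <= eps * s) by nra. nra.
Qed.

Lemma inv_lt1 y : 1 < y -> 0 < 1/y < 1.
Proof.
  intros. split. apply Rdiv_lt_0_compat; lra.
  apply (Rmult_lt_reg_r y); [lra|]. unfold Rdiv; rewrite Rmult_assoc, Rinv_l; lra.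
Qed.

Lemma fq_K q y : 1 < q -> 1 < y -> fq q y + 1/2 = Kf q (1/y) / (1/y * Ef (q/(q-1)) (1/y)).
Proof.
  intros hq hy. rewrite fq_eq by auto.
  assert (hs : 0 < 1/y < 1) by (apply inv_lt1; lra).
  assert (hp : 1 < q/(q-1)) by (apply (Rmult_lt_reg_r (q-1)); [lra|]; unfold Rdiv; rewrite Rmult_assoc, Rinv_l; lra).
  assert (HE := Ef_ge (q/(q-1)) (1/y) hp hs).
  assert (E : Rpower (y-1) (q/(q-1)) = Rpower y (q/(q-1)) * Rpower (1 - 1/y) (q/(q-1))).
  { rewrite Rpower_mult_distr by lra. f_equal. field. lra. }
  assert (0 < Rpower y (q/(q-1))) by apply exp_pos.
  unfold Fq, Kf. rewrite E. unfold Ef in *.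
  replace (Rpower y (q / (q - 1)) + -1 * (Rpower y (q / (q - 1)) * Rpower (1 - 1 / y) (q / (q - 1))))
    with (Rpower y (q / (q - 1)) * (1 - Rpower (1 - 1 / y) (q / (q - 1)))) by ring.
  field. repeat split; lra.
Qed.

Lemma fq_lim q eps : 1 < q -> 0 < eps -> exists M, 1 < M /\ forall y, M < y -> Rabs (fq q y + 1/2) < eps.
Proof.
  intros hq he.
  destruct (proj1 (continuity_pt_locally (K2 q) 0) (cont_K2 q) (mkposreal _ he)) as [d Hd].
  simpl in Hd. rewrite (K2_0 q hq) in Hd. setoid_rewrite Rminus_0_r in Hd.
  set (s0 := Rmin (d/2) (1/2)).
  assert (hs0 : 0 < s0) by (unfold s0; apply Rmin_glb_lt; [apply Rdiv_lt_0_compat; [apply cond_pos|]|]; lra).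
  assert (hs1 : s0 <= 1/2) by apply Rmin_r.
  assert (hs2 : s0 < d) by (unfold s0; assert (H0 := Rmin_l (d/2) (1/2)); assert (H1 := cond_pos d); lra).
  exists (1/s0). split.
  { apply (Rmult_lt_reg_r s0); auto. unfold Rdiv; rewrite Rmult_assoc, Rinv_l; lra. }
  intros y hy.
  assert (hy1 : 1 < y).
  { assert (1 < 1/s0) by (apply (Rmult_lt_reg_r s0); auto; unfold Rdiv; rewrite Rmult_assoc, Rinv_l; lra). lra. }
  assert (hs : 0 < 1/y < 1) by (apply inv_lt1; lra).
  assert (hsy : 1/y < s0).
  { assert (0 < 1/s0) by (apply Rdiv_lt_0_compat; lra).
    unfold Rdiv in *. rewrite Rmult_1_l in *. rewrite <- (Rinv_inv s0). apply Rinv_lt_contravar; nra. }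
  assert (hp : 1 < q/(q-1)) by (apply (Rmult_lt_reg_r (q-1)); [lra|]; unfold Rdiv; rewrite Rmult_assoc, Rinv_l; lra).
  assert (HE := Ef_ge (q/(q-1)) (1/y) hp hs).
  assert (HK := K_bound q (1/y) eps hq hs).
  assert (HK' : Rabs (Kf q (1/y)) <= eps * (1/y)^2).
  { apply HK. intros c hc. apply Hd. change (Rabs (c - 0) < d). rewrite Rminus_0_r, Rabs_right by lra. lra. }
  rewrite fq_K by auto. set (s := 1/y) in *.
  unfold Rdiv. rewrite Rabs_mult, Rabs_inv, (Rabs_right (s * _)) by nra.
  apply Rle_lt_trans with (eps * s^2 * / (s * Ef (q/(q-1)) s)).
  - apply Rmult_le_compat_r; auto. left; apply Rinv_0_lt_compat; nra.
  - apply (Rmult_lt_reg_r (s * Ef (q / (q - 1)) s)); [nra|].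
    assert (0 < s * Ef (q / (q - 1)) s) by nra. rewrite Rmult_assoc, Rinv_l by lra. assert (0 < eps * s * (Ef (q / (q - 1)) s - s)) by (apply Rmult_lt_0_compat; [apply Rmult_lt_0_compat|]; lra). nra.
Qed.

Lemma fq_le q x y : 1 < q -> 1 <= x -> x <= y -> fq q x <= fq q y.
Proof. intros hq hx hxy. destruct (Rle_lt_or_eq_dec x y hxy); [left; apply fq_incr; auto|subst; lra]. Qed.

Lemma fq_1 q : fq q 1 = -1.
Proof. apply fq_le1; lra. Qed.

Lemma fq_le_half q z : 1 < q -> 1 <= z -> fq q z <= -1/2.
Proof.
  intros hq hz. destruct (Rle_lt_dec (fq q z) (-1/2)) as [h|h]; auto.
  destruct (fq_lim q (fq q z + 1/2) hq ltac:(lra)) as [M [hM HM]].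
  set (w := Rmax M z + 1).
  assert (hw1 : M < w) by (unfold w; assert (H0 := Rmax_l M z); lra).
  assert (hw2 : z < w) by (unfold w; assert (H0 := Rmax_r M z); lra).
  assert (H1 := HM w hw1). assert (H2 := fq_incr q z w hq hz hw2).
  rewrite Rabs_right in H1 by lra. lra.
Qed.

Lemma fq_range q y : 1 < q -> 1 <= y -> -1 <= fq q y < -1/2.
Proof.
  intros hq hy. split.
  - rewrite <- (fq_1 q). apply fq_le; auto; lra.
  - apply Rlt_le_trans with (fq q (y+1)); [apply fq_incr; auto; lra|apply fq_le_half; auto; lra].
Qed.

Lemma fq_inj q x y : 1 < q -> 1 <= x -> 1 <= y -> fq q x = fq q y -> x = y.
Proof.
  intros hq hx hy E. destruct (Rtotal_order x y) as [h|[h|h]]; auto.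
  - assert (H0 := fq_incr q x y hq hx h). lra.
  - assert (H0 := fq_incr q y x hq hy h). lra.
Qed.

Lemma fq_surj q z : 1 < q -> -1 <= z < -1/2 -> exists y, 1 <= y /\ fq q y = z.
Proof.
  intros hq hz. destruct (Rle_lt_or_eq_dec (-1) z (proj1 hz)) as [h|h].
  - destruct (fq_lim q (-1/2 - z) hq ltac:(lra)) as [M [hM HM]].
    assert (H1 := HM (M+1) ltac:(lra)).
    assert (H2 : z < fq q (M+1)) by (apply Rabs_def2 in H1; lra).
    destruct (IVT_gen (fq q) 1 (M+1) z) as [y [Hy Ey]].
    + intros x. apply continuity_pt_filterlim, cont_fq; auto.
    + rewrite fq_1. rewrite Rmin_left, Rmax_right; lra.
    + exists y. rewrite Rmin_left in Hy by lra. split; [lra|auto].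
  - exists 1. split; [lra|]. rewrite fq_1; auto.
Qed.

Lemma inverse_exists q : 1 < q -> exists g : R -> R,
        (forall z, -1 <= z < -1/2 -> 1 <= g z /\ fq q (g z) = z)
        /\ (forall y, 1 <= y -> g (fq q y) = y)
        /\ (forall z w, -1 <= z -> z < w -> w < -1/2 -> g z < g w)
        /\ (forall z, -1 <= z < -1/2 ->
              filterlim g (within (fun x => -1 <= x < -1/2) (locally z))
                (locally (g z))).
Proof.
  intros hq.
  assert (Hex : forall z, exists y, -1 <= z < -1/2 -> 1 <= y /\ fq q y = z).
  { intros z. destruct (classic (-1 <= z < -1/2)) as [h|h].
    - destruct (fq_surj q z hq h) as [y Hy]. exists y; auto.
    - exists 0. intros; contradiction. }
  set (g := fun z => proj1_sig (constructive_indefinite_description _ (Hex z))).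
  assert (Hg : forall z, -1 <= z < -1/2 -> 1 <= g z /\ fq q (g z) = z).
  { intros z. unfold g. destruct (constructive_indefinite_description _ (Hex z)); simpl; auto. }
  assert (Hgf : forall y, 1 <= y -> g (fq q y) = y).
  { intros y hy. destruct (Hg (fq q y) (fq_range q y hq hy)) as [h1 h2].
    apply fq_inj with q; auto. }
  assert (Hmon : forall z w, -1 <= z -> z < w -> w < -1/2 -> g z < g w).
  { intros z w h1 h2 h3. destruct (Hg z ltac:(lra)) as [a1 a2]. destruct (Hg w ltac:(lra)) as [b1 b2].
    destruct (Rlt_le_dec (g z) (g w)) as [h|h]; auto.
    assert (H0 := fq_le q (g w) (g z) hq b1 h). lra. }
  exists g. split; [auto|split; [auto|split; [auto|]]].
  intros z hz. intros P [eps HP].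
  destruct (Hg z hz) as [gz1 gz2].
  set (y0 := g z) in *.
  set (a := y0 + eps).
  assert (Ha : z < fq q a) by (rewrite <- gz2; apply fq_incr; auto; unfold a; assert (H0 := cond_pos eps); lra).
  set (b := Rmax 1 (y0 - eps/2)).
  assert (Hb1 : 1 <= b) by apply Rmax_l.
  assert (Hb2 : b <= y0) by (apply Rmax_lub; [auto|assert (H0 := cond_pos eps); lra]).
  set (d2 := if Rlt_dec b y0 then z - fq q b else 1).
  assert (Hd2 : 0 < d2).
  { unfold d2. destruct (Rlt_dec b y0) as [h|h]; [|lra].
    rewrite <- gz2. assert (H0 := fq_incr q b y0 hq Hb1 h). lra. }
  assert (Hd : 0 < Rmin (fq q a - z) d2) by (apply Rmin_glb_lt; lra).
  exists (mkposreal _ Hd). intros w Hw HD. apply HP.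
  change (Rabs (w - z) < Rmin (fq q a - z) d2) in Hw.
  change (Rabs (g w - y0) < eps).
  assert (Hw1 := Rmin_l (fq q a - z) d2). assert (Hw2 := Rmin_r (fq q a - z) d2).
  apply Rabs_def2 in Hw. destruct Hw as [Hw3 Hw4].
  destruct (Hg w HD) as [gw1 gw2].
  assert (U : g w < a).
  { destruct (Rlt_le_dec (g w) a) as [h|h]; auto.
    assert (H0 := fq_le q a (g w) hq ltac:(unfold a; assert (H0 := cond_pos eps); lra) h). lra. }
  assert (L : y0 - eps < g w).
  { unfold d2 in *. destruct (Rlt_dec b y0) as [h|h].
    - destruct (Rlt_le_dec b (g w)) as [h'|h'].
      + assert (H0 := Rmax_r 1 (y0 - eps/2)). fold b in H0. assert (H1 := cond_pos eps). lra.
      + assert (H0 := fq_le q (g w) b hq gw1 h'). lra.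
    - assert (H1 := cond_pos eps). assert (Hy0 : y0 <= 1).
      { unfold b, Rmax in h, Hb2. destruct (Rle_dec 1 (y0 - eps/2)); lra. }
      lra. }
  apply Rabs_def1; unfold a in U; lra.
Qed.

Theorem lemmaA1 (q : R) (hq : 1 < q) :
  (* 1. continuity of f on [1,+oo) *)
  (forall y, 1 <= y ->
     filterlim (fq q) (within (fun x => 1 <= x) (locally y)) (locally (fq q y)))
  (* f is (strictly) increasing on [1,+oo) *)
  /\ (forall x y, 1 <= x -> x < y -> fq q x < fq q y)
  (* f is smooth on (1,+oo): derivatives of every order exist *)
  /\ (forall y, 1 < y -> forall n : nat, ex_derive_n (fq q) n y)
  (* f is a bijection from [1,+oo) onto [-1,-1/2) *)
  /\ (forall y, 1 <= y -> -1 <= fq q y < -1/2)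
  /\ (forall x y, 1 <= x -> 1 <= y -> fq q x = fq q y -> x = y)
  /\ (forall z, -1 <= z < -1/2 -> exists y, 1 <= y /\ fq q y = z)
  (* with an increasing and continuous inverse *)
  /\ (exists g : R -> R,
        (forall z, -1 <= z < -1/2 -> 1 <= g z /\ fq q (g z) = z)
        /\ (forall y, 1 <= y -> g (fq q y) = y)
        /\ (forall z w, -1 <= z -> z < w -> w < -1/2 -> g z < g w)
        /\ (forall z, -1 <= z < -1/2 ->
              filterlim g (within (fun x => -1 <= x < -1/2) (locally z))
                (locally (g z))))
  (* 2. derivative formula on (1,+oo) *)
  /\ (forall y, 1 < y -> is_derive (fq q) y (fq_deriv_formula q y))
  (* the extension of f' by q-1 at 1 is continuous on [1,+oo) *)
  /\ (forall y, 1 <= y ->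
        filterlim (fq_deriv_ext q) (within (fun x => 1 <= x) (locally y))
          (locally (fq_deriv_ext q y))).
Proof.
  split; [|split; [|split; [|split; [|split; [|split; [|split; [|split]]]]]]].
  - intros y hy. eapply filterlim_filter_le_1; [apply filter_le_within|].
    apply cont_fq; auto.
  - intros; apply fq_incr; auto.
  - intros; apply smooth_fq; auto.
  - intros; apply fq_range; auto.
  - intros; eapply fq_inj; eauto.
  - intros; apply fq_surj; auto.
  - apply inverse_exists; auto.
  - intros; apply deriv_fq; auto.
  - intros y hy. rewrite (fqd_H q y hq hy).
    apply filterlim_ext_loc with (H q).
    + unfold within. apply filter_forall. intros x hx. symmetry; apply fqd_H; auto.
    + eapply filterlim_filter_le_1; [apply filter_le_within|].
      apply cont_H; auto.
Qed.
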